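(* For integers $m,j$ let $U(m,j):=\binom{m-j}{j}2^j$ if $0\le j$ and $2j\le m$, and $U(m,j):=0$ otherwise. For $t\ge0$ let $C_t:=\binom{2t}{t}2^t$ (so $C_t=U(3t,t)$), and for $t\ge1$ let \[D_t:=\sum_{j=0}^{t-1}U(3t,j)-\sum_{j\ge t+1}U(3t,j),\qquad B_t:=\sum_{j=0}^{t-1}U(3t-1,j)-\sum_{j\ge t+1}U(3t-1,j).\] Then for all $t\ge1$: (i) $D_t=C_{t-1}-C_{t-2}+C_{t-3}-\cdots+(-1)^{t-1}C_0$; (ii) $0<D_t<\tfrac12C_t$; (iii) $B_t=\tfrac12C_t-D_t$ and $0<B_t<\tfrac12C_t$; (iv) as formal power series, $\sum_{t\ge1}D_tz^t=\dfrac{z}{(1+z)\sqrt{1-8z}}$. *)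

(* Defs.v *)
From mathcomp Require Import all_boot all_order all_algebra.
Set Implicit Arguments. Unset Strict Implicit. Unset Printing Implicit Defensive.
Import Order.TTheory GRing.Theory Num.Theory.
Local Open Scope ring_scope.

(* U(m,j) = binom(m-j, j) 2^j if 0 <= j and 2j <= m, 0 otherwise.
   Only nonnegative j (and m) occur in the statement. *)
Definition U (m j : nat) : rat :=
  if (2 * j <= m)%N then ('C(m - j, j) * 2 ^ j)%N%:R else 0.

Definition Cc (t : nat) : rat := ('C(2 * t, t) * 2 ^ t)%N%:R.

(* D_t; the sum over j >= t+1 is finite since U(m,j)=0 for j > m *)
Definition D (t : nat) : rat :=
  \sum_(0 <= j < t) U (3 * t) j - \sum_(t.+1 <= j < (3 * t).+1) U (3 * t) j.

Definition B (t : nat) : rat :=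
  \sum_(0 <= j < t) U (3 * t - 1) j
  - \sum_(t.+1 <= j < (3 * t - 1).+1) U (3 * t - 1) j.

Definition fps := nat -> rat.
Definition fps_mul (f g : fps) : fps :=
  fun n => \sum_(i < n.+1) f i * g (n - i)%N.
Definition fps_X : fps := fun n => if n == 1%N then 1 else 0.
Definition fps_one_plus_X : fps := fun n => if (n <= 1)%N then 1 else 0.
Definition fps_one_minus_8X : fps :=
  fun n => if n == 0%N then 1 else if n == 1%N then -8 else 0.
Definition is_sqrt_1_minus_8X (S : fps) : Prop :=
  fps_mul S S = fps_one_minus_8X /\ S 0%N = 1.

Definition Dseries : fps := fun t => if t == 0%N then 0 else D t.

(* Main.v *)
Require Import Defs.
From mathcomp Require Import all_boot all_order all_algebra.
From mathcomp Require Import lra ring zify.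
From Stdlib Require Import FunctionalExtensionality.
Import Order.TTheory GRing.Theory Num.Theory.
Local Open Scope ring_scope.

Lemma U_E m j : U m j = ('C(m - j, j))%:R * 2 ^+ j.
Proof.
rewrite /U; case: ifP => h; first by rewrite natrM natrX.
rewrite bin_small ?mul0r //; lia.
Qed.

Lemma U0 m : U m 0 = 1.
Proof. by rewrite U_E subn0 bin0 mulr1. Qed.

Lemma binN (m j : nat) : ('C(m.+2 - j.+1, j.+1) = 'C(m.+1 - j.+1, j.+1) + 'C(m - j, j))%N.
Proof.
case: (leqP j m) => h.
  have -> : (m.+2 - j.+1 = (m - j).+1)%N by lia.
  have -> : (m.+1 - j.+1 = (m - j))%N by lia.
  by rewrite binS.
have -> : (m.+2 - j.+1 = 0)%N by lia.
have -> : (m.+1 - j.+1 = 0)%N by lia.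
have -> : (m - j = 0)%N by lia.
by case: j h => [|j] h //=; rewrite !bin0n.
Qed.

Lemma Urec m j : U m.+2 j.+1 = U m.+1 j.+1 + 2 * U m j.
Proof. rewrite !U_E binN natrD exprS; ring. Qed.

Definition P m k : rat := \sum_(0 <= j < k) U m j.
Definition a m : rat := P m m.+1.

Lemma PS m k : P m k.+1 = P m k + U m k.
Proof. by rewrite /P big_nat_recr. Qed.

Lemma P0 m : P m 0 = 0.
Proof. by rewrite /P big_geq. Qed.

Lemma Prec m k : P m.+2 k.+1 = P m.+1 k.+1 + 2 * P m k.
Proof.
elim: k => [|k IH]; first by rewrite PS P0 !PS !P0 !U0 add0r mulr0; ring.
rewrite PS IH (PS m.+1 k.+1) (PS m k) Urec; ring.
Qed.

Lemma Uhigh m j : (m < j)%N -> U m j = 0.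
Proof. by move=> h; rewrite /U ifF //; apply/negbTE; lia. Qed.

Lemma Pbig m k : (m < k)%N -> P m k = a m.
Proof.
move=> h; rewrite /a; elim: k h => [//|k IH] h.
case: (ltnP m k) => h2; first by rewrite PS IH // Uhigh // addr0.
by have -> : k = m by lia.
Qed.

Lemma arec m : a m.+2 = a m.+1 + 2 * a m.
Proof.
by rewrite {1}/a Prec (@Pbig m.+1 m.+3) // (@Pbig m m.+2).
Qed.

Lemma aa m : a m + a m.+1 = 2 ^+ m.+1.
Proof.
elim: m => [|m IH].
  by rewrite /a !PS !P0 !U0 /U /= expr1; ring.
rewrite arec exprS -IH; ring.
Qed.

Definition f0 k := P (3 * k) k.
Definition f1 k := P (3 * k).+1 k.

Lemma e3 k : (3 * k.+1 = (3 * k).+3)%N. Proof. lia. Qed.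
Lemma e32 k : (3 * k.+2 = (3 * k).+4.+2)%N. Proof. lia. Qed.

Lemma B1 k : 'C((2 * k).+2, k.+1) = (2 * 'C((2 * k).+1, k))%N.
Proof.
rewrite binS -{1}(bin_sub (n := (2*k).+1) (m := k.+1)); last lia.
have -> : ((2 * k).+1 - k.+1 = k)%N by lia. lia.
Qed.

Lemma UCc t : U (3 * t) t = Cc t.
Proof.
rewrite U_E /Cc natrM natrX; have -> : (3 * t - t = 2 * t)%N by lia. by [].
Qed.

Lemma I1 k : Cc k.+1 = 4 * U (3 * k).+1 k.
Proof.
rewrite /Cc U_E natrM natrX.
have -> : ((3 * k).+1 - k = (2 * k).+1)%N by lia.
have -> : (2 * k.+1 = (2 * k).+2)%N by lia.
rewrite B1 natrM exprS; ring.
Qed.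

Lemma I1' k : U (3 * k).+4 k.+1 = Cc k.+1 + 2 * U (3 * k).+2 k.
Proof. by rewrite Urec -UCc e3. Qed.

Lemma I2 k : Cc k.+2 = 6 * U (3 * k).+4 k.+1 + 4 * U (3 * k).+3 k - 2 * U (3 * k).+4.+1 k.+1.
Proof.
rewrite /Cc !U_E natrM natrX.
have -> : ((3 * k).+4 - k.+1 = (2 * k).+3)%N by lia.
have -> : ((3 * k).+3 - k = (2 * k).+3)%N by lia.
have -> : ((3 * k).+4.+1 - k.+1 = (2 * k).+4)%N by lia.
have -> : (2 * k.+2 = (2 * k.+1).+2)%N by lia.
rewrite B1.
have -> : ((2 * k.+1).+1 = (2 * k).+3)%N by lia.
rewrite (binS (2 * k).+3 k) !natrM natrD !exprS; ring.
Qed.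

Lemma LA k : f1 k.+1 = 3 * f0 k.+1 - 2 * U (3 * k).+2 k - 4 * f1 k.
Proof.
rewrite /f0 /f1 e3 (Prec (3 * k).+2 k) (Prec (3 * k).+1 k) PS; ring.
Qed.

Lemma LB k : f0 k.+2 = 3 * f1 k.+1 + 2 * f0 k.+1 - 2 * U (3 * k).+3 k + U (3 * k).+4.+1 k.+1.
Proof.
rewrite /f0 /f1 e32 e3 (Prec (3 * k).+4 k.+1) (PS (3 * k).+4.+1 k.+1).
rewrite (Prec (3 * k).+3 k) (PS (3 * k).+3 k); ring.
Qed.

Lemma ST k : (f0 k + f1 k = 8 ^+ k - U (3 * k).+1 k) /\
             (f0 k.+1 + f0 k = 3 * 8 ^+ k - Cc k.+1 / 2).
Proof.
elim: k => [|k [Sk Tk]].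
  rewrite /f0 /f1 /= !P0 PS P0 U0 U0 /Cc expr0; split; first lra.
  have -> : ('C(2 * 1, 1) * 2 ^ 1)%N = 4%N by [].
  lra.
have Sk1 : f0 k.+1 + f1 k.+1 = 8 ^+ k.+1 - U (3 * k.+1).+1 k.+1.
  rewrite e3 LA I1' exprS.
  have := I1 k; lra.
split => //.
move: Sk1; rewrite e3 exprS => Sk1.
rewrite LB.
have := I2 k; have := I1' k; lra.
Qed.

Lemma sumR m k : (k <= m.+1)%N -> \sum_(k <= j < m.+1) U m j = a m - P m k.
Proof.
move=> h; rewrite /a /P (@big_cat_nat _ _ _ k 0 m.+1) //= addrAC subrr add0r; by [].
Qed.

Lemma DE t : D t = 2 * f0 t + Cc t - a (3 * t).
Proof.
rewrite /D sumR; last lia.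
rewrite -/(P (3 * t) t) PS UCc /f0; ring.
Qed.

Lemma p8 t : 2 ^+ (3 * t) = 8 ^+ t :> rat.
Proof. by rewrite exprM; congr (_ ^+ _); rewrite !exprS expr0; ring. Qed.

Lemma Drec t : D t.+1 + D t = Cc t.
Proof.
rewrite !DE e3.
have [_ T] := ST t.
have h1 := aa (3 * t). have h2 := aa (3 * t).+1. have h3 := aa (3 * t).+2.
move: h1 h2 h3; rewrite !exprS p8 => h1 h2 h3.
move: T; rewrite /f0 e3 => T.
lra.
Qed.

Lemma D0 : D 0 = 0.
Proof. by rewrite /D !big_geq // subrr. Qed.

Lemma Dalt t : D t = \sum_(i < t) (-1) ^+ (t - 1 - i)%N * Cc i.
Proof.
elim: t => [|t IH]; first by rewrite D0 big_ord0.
have -> : D t.+1 = Cc t - D t by have := Drec t; lra.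
rewrite IH big_ord_recr /= subSS subn0 subnn expr0 mul1r.
rewrite addrC; congr (_ + _).
rewrite -sumrN; apply: eq_bigr => i _ /=.
have -> : (t - i = (t - 1 - i).+1)%N by have := ltn_ord i; lia.
by rewrite exprS mulN1r mulNr.
Qed.

Lemma Cc_pos t : 0 < Cc t.
Proof. by rewrite /Cc ltr0n muln_gt0 bin_gt0 expn_gt0 /=; apply/andP; split => //; lia. Qed.

Lemma Cc_grow t : 4 * Cc t <= Cc t.+1.
Proof.
rewrite /Cc -natrM ler_nat.
have -> : (2 * t.+1 = (2 * t).+2)%N by lia.
rewrite B1 expnS.
suff : ('C(2 * t, t) <= 'C((2 * t).+1, t))%N by move=> h; nia.
case: t => [|s] //.
rewrite binS; have -> : (2 * s.+1 = (2 * s).+2)%N by lia. lia.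
Qed.

Lemma Dbounds t : (0 < D t.+1) /\ (D t.+1 <= Cc t).
Proof.
elim: t => [|t [h1 h2]].
  have := Drec 0; rewrite D0 => h; have := Cc_pos 0; lra.
have := Drec t.+1; have := Cc_grow t; have := Cc_pos t; lra.
Qed.

Lemma I3 k : U (3 * k).+2 k.+1 = 2 * U (3 * k).+1 k.
Proof.
rewrite !U_E.
have -> : ((3 * k).+2 - k.+1 = (2 * k).+1)%N by lia.
have -> : ((3 * k).+1 - k = (2 * k).+1)%N by lia.
rewrite -{1}(bin_sub (n := (2*k).+1) (m := k.+1)); last lia.
have -> : ((2 * k).+1 - k.+1 = k)%N by lia.
rewrite exprS; ring.
Qed.

Lemma BD k : B k.+1 + D k.+1 = Cc k.+1 / 2.
Proof.
rewrite /B (_ : (3 * k.+1 - 1 = (3 * k).+2)%N); last lia.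
rewrite sumR; last lia.
rewrite -/(P (3 * k).+2 k.+1) (PS (3 * k).+2 k.+1) DE.
have [S T] := ST k.
have h := aa (3 * k).+2.
move: h; rewrite !exprS p8 => h.
have E : f0 k.+1 = P (3 * k).+2 k.+1 + 2 * f1 k by rewrite /f0 /f1 e3 Prec.
have := I1 k; have := I3 k.
rewrite e3; lra.
Qed.

Lemma Lprod (f g : fps) (al be ga : rat) :
  (forall i, (i.+1)%:R * f i.+1 = (al * i%:R + be) * f i) ->
  (forall i, (i.+1)%:R * g i.+1 = (al * i%:R + ga) * g i) ->
  forall n, (n.+1)%:R * fps_mul f g n.+1 = (al * n%:R + be + ga) * fps_mul f g n.
Proof.
move=> hf hg n; rewrite /fps_mul mulr_sumr.
transitivity (\sum_(i < n.+2) (i%:R * f i * g (n.+1 - i)%N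
                               + f i * ((n.+1 - i)%N%:R * g (n.+1 - i)%N))).
  apply: eq_bigr => i _; have hi := ltn_ord i.
  have -> : (n.+1)%:R = i%:R + (n.+1 - i)%N%:R :> rat by rewrite -natrD subnKC //.
  ring.
have E1 : \sum_(i < n.+2) i%:R * f i * g (n.+1 - i)%N
          = \sum_(i < n.+1) (al * i%:R + be) * f i * g (n - i)%N.
  rewrite big_ord_recl /= mul0r mul0r add0r; apply: eq_bigr => i _.
  by rewrite /bump leq0n add1n subSS hf.
have E2 : \sum_(i < n.+2) f i * ((n.+1 - i)%N%:R * g (n.+1 - i)%N)
          = \sum_(i < n.+1) f i * ((al * (n - i)%N%:R + ga) * g (n - i)%N).
  rewrite big_ord_recr /= subnn mul0r mulr0 addr0; apply: eq_bigr => i _.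
  have hi := ltn_ord i.
  by rewrite /= subSn // hg.
rewrite big_split /= E1 E2 -big_split mulr_sumr; apply: eq_bigr => i _.
have hi := ltn_ord i.
rewrite natrB // /=; ring.
Qed.

Fixpoint sq (n : nat) : rat :=
  match n with 0 => 1 | n'.+1 => (8 * n'%:R - 4) / (n'.+1)%:R * sq n' end.

Lemma sq_rec i : (i.+1)%:R * sq i.+1 = (8 * i%:R + (-4)) * sq i.
Proof.
rewrite /=. have h : (i.+1)%:R != 0 :> rat by rewrite pnatr_eq0.
rewrite mulrA mulrC (mulrCA (i.+1)%:R) divff // mulr1 mulrC.
by [].
Qed.

Lemma Cc_rec i : (i.+1)%:R * Cc i.+1 = (8 * i%:R + 4) * Cc i.
Proof.
have N : (i.+1 * ('C(2 * i.+1, i.+1) * 2 ^ i.+1) = (8 * i + 4) * ('C(2 * i, i) * 2 ^ i))%N.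
  have -> : (2 * i.+1 = (2 * i).+2)%N by lia.
  rewrite B1 expnS.
  have h := mul_bin_diag (2 * i).+1 i.
  rewrite /= -(bin_sub (n := (2*i).+1) (m := i.+1)) in h; last lia.
  have e : ((2 * i).+1 - i.+1 = i)%N by lia.
  rewrite e in h.
  nia.
rewrite /Cc -natrM N natrM natrD natrM; congr (_ * _).
Qed.

Definition Q := fps_mul sq sq.

Lemma Q_rec n : (n.+1)%:R * Q n.+1 = (8 * n%:R + (-4) + (-4)) * Q n.
Proof. exact: Lprod sq_rec sq_rec n. Qed.

Lemma Q0 : Q 0 = 1.
Proof. by rewrite /Q /fps_mul big_ord1 /= mulr1. Qed.

Lemma QE : Q = fps_one_minus_8X.
Proof.
apply: functional_extensionality => n.
rewrite /fps_one_minus_8X.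
case: n => [|n]; first by rewrite Q0.
have Q1 : Q 1 = -8 by have := Q_rec 0; rewrite Q0; lra.
case: n => [|n]; first by rewrite Q1.
rewrite /=.
elim: n => [|n IH].
  by have := Q_rec 1; rewrite Q1; lra.
have := Q_rec n.+2; rewrite IH mulr0 => /eqP; rewrite mulf_eq0 pnatr_eq0 /= => /eqP.
done.
Qed.

Lemma decomp (S : fps) n :
  fps_mul S S n.+1 = S 0%N * S n.+1 + \sum_(i < n) S i.+1 * S (n - i)%N + S n.+1 * S 0%N.
Proof.
rewrite /fps_mul big_ord_recl big_ord_recr /= subn0 subnn addrA; congr (_ + _ + _).
Qed.

Lemma uniq_sqrt_aux (S T : fps) : fps_mul S S = fps_mul T T -> S 0%N = 1 -> T 0%N = 1 ->
  forall k i, (i <= k)%N -> S i = T i.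
Proof.
move=> E S0 T0.
elim=> [|n IH] i hi.
  have -> : i = 0%N by lia.
  by rewrite S0 T0.
case: (leqP i n) => h; first exact: IH.
have -> : i = n.+1 by lia.
have := congr1 (fun F => F n.+1) E; rewrite /= !decomp S0 T0.
have -> : \sum_(i < n) S i.+1 * S (n - i)%N = \sum_(i < n) T i.+1 * T (n - i)%N.
  apply: eq_bigr => j _; have hj := ltn_ord j.
  by rewrite !IH //; lia.
lra.
Qed.

Lemma uniq_sqrt (S T : fps) : fps_mul S S = fps_mul T T -> S 0%N = 1 -> T 0%N = 1 ->
  forall n, S n = T n.
Proof. by move=> E S0 T0 m; exact: (@uniq_sqrt_aux S T E S0 T0 m m (leqnn m)). Qed.

Definition H := fps_mul Cc sq.

Lemma Cc0 : Cc 0 = 1. Proof. by rewrite /Cc. Qed.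

Lemma HE n : H n = if n == 0%N then 1 else 0.
Proof.
have Hrec n' : (n'.+1)%:R * H n'.+1 = (8 * n'%:R + 4 + (-4)) * H n'.
  exact: Lprod Cc_rec sq_rec n'.
have H0 : H 0 = 1 by rewrite /H /fps_mul big_ord1 Cc0 /= mulr1.
case: n => [|n] //=.
elim: n => [|n IH].
  by have := Hrec 0%N; rewrite H0; lra.
have := Hrec n.+1; rewrite IH mulr0 => /eqP; rewrite mulf_eq0 pnatr_eq0 /= => /eqP.
done.
Qed.

Lemma DseriesE n : Dseries n = D n.
Proof. by rewrite /Dseries; case: n => [|n] //=; rewrite D0. Qed.

Lemma WE n : fps_mul Dseries fps_one_plus_X n.+1 = Cc n.
Proof.
rewrite /fps_mul big_ord_recr big_ord_recr /= subnn.
have -> : (n.+1 - n = 1)%N by lia.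
rewrite big1 ?add0r.
  by rewrite /fps_one_plus_X /= !mulr1 !DseriesE addrC Drec.
move=> i _; have hi := ltn_ord i.
rewrite /fps_one_plus_X ifF ?mulr0 //; apply/negbTE; lia.
Qed.

Lemma W0 : fps_mul Dseries fps_one_plus_X 0 = 0.
Proof. by rewrite /fps_mul big_ord1 DseriesE D0 mul0r. Qed.

Theorem mainTheorem10 :
  (forall t : nat, (1 <= t)%N ->
     (* (i) *)
     D t = \sum_(i < t) (-1) ^+ (t - 1 - i)%N * Cc i
     (* (ii) *)
     /\ (0 < D t /\ D t < Cc t / 2)
     (* (iii) *)
     /\ (B t = Cc t / 2 - D t /\ 0 < B t /\ B t < Cc t / 2))
  (* (iv): sum_{t>=1} D_t z^t = z / ((1+z) sqrt(1-8z)) *)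
  /\ (exists S : fps, is_sqrt_1_minus_8X S)
  /\ (forall S : fps, is_sqrt_1_minus_8X S ->
        fps_mul (fps_mul Dseries fps_one_plus_X) S = fps_X).
Proof.
split.
  case=> [//|s] _.
  have [h1 h2] := Dbounds s.
  have h3 := Cc_grow s. have h4 := Cc_pos s. have h5 := BD s.
  split; first exact: Dalt.
  split; first by split; lra.
  split; first lra.
  split; lra.
split.
  by exists sq; split; [exact: QE | by []].
move=> S [hS hS0].
have Eq : forall n, S n = sq n.
  apply: uniq_sqrt => //; by rewrite hS -QE.
apply: functional_extensionality => m.
case: m => [|n].
  by rewrite {1}/fps_mul big_ord1 W0 mul0r.
rewrite {1}/fps_mul big_ord_recl W0 mul0r add0r.
transitivity (H n); last by rewrite HE /fps_X.
rewrite /H [in RHS]/fps_mul; apply: eq_bigr => i _.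
by rewrite lift0 WE subSS Eq.
Qed.
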